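(* Let $\lambda\in\mathbb{C}$, fix $a,b\in\mathbb{C}$ with $a^2=-\lambda$ and $b^2=1-\lambda$ (i.e. $a=(-\lambda)^{1/2}$, $b=(1-\lambda)^{1/2}$), and let $\phi:\mathbb{Z}^2\to\mathbb{C}$ be a (generic, nonvanishing) solution of \[ \frac{\widetilde{\overline\phi}}{\phi}=\frac{b\,\overline\phi-a\,\widetilde\phi}{b\,\widetilde\phi-a\,\overline\phi}. \] Then \[ u=\frac{a\,\overline\phi-b\,\widetilde\phi}{\phi},\qquad v=a\,\frac{\overline\phi}{\phi} \] satisfy respectively the dKdV equation $\widetilde{\overline u}-u=\frac1{\widetilde u}-\frac1{\overline u}$ and the equation \[ \big(v\,\overline v-\widetilde v\,\widetilde{\overline v}\big)^2+\big(v-\widetilde{\overline v}\big)\big(\overline v-\widetilde v\big)\big(\lambda-v\,\overline v\big)\big(\lambda-\widetilde v\,\widetilde{\overline v}\big)=0. \]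
   Context: Shift notation: for $f:\mathbb{Z}^2\to\mathbb{C}$, $f=f_{l,m}$, $\overline f=f_{l+1,m}$, $\widetilde f=f_{l,m+1}$, $\widetilde{\overline f}=f_{l+1,m+1}$. *)

(* Defs.v *)
From mathcomp Require Import all_boot all_algebra.
From mathcomp Require Import complex.
From mathcomp Require Import Rstruct.
Set Implicit Arguments. Unset Strict Implicit. Unset Printing Implicit Defensive.
Import GRing.Theory Num.Theory.
Local Open Scope ring_scope.

Definition Cc : Type := complex Rdefinitions.R.

(* Lattice shifts on f : Z^2 -> C:  f = f l m, bar f = f (l+1) m,
   tilde f = f l (m+1), tilde bar f = f (l+1) (m+1). *)

Definition u_of (a b : Cc) (phi : int -> int -> Cc) (l m : int) : Cc :=
  (a * phi (l + 1) m - b * phi l (m + 1)) / phi l m.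

Definition v_of (a : Cc) (phi : int -> int -> Cc) (l m : int) : Cc :=
  a * (phi (l + 1) m / phi l m).

(* Main.v *)
Require Import Defs.
From mathcomp Require Import all_boot all_algebra.
From mathcomp Require Import complex Rstruct.
From mathcomp Require Import ring.
Import GRing.Theory.
Local Open Scope ring_scope.

Lemma nz_frac (F: fieldType) (x n d : F) : x != 0 -> x = n / d -> n != 0.
Proof. move=> hx e; apply: contraNneq hx => hn; by rewrite e hn mul0r. Qed.

Section S.
Variables (F: fieldType) (a b P X Y Z W Q R S : F).
Hypotheses (hP: P!=0) (hX: X!=0) (hY: Y!=0) (hZ: Z!=0)
 (h1: b*Y - a*X != 0) (h2: b*Z - a*W != 0) (h3: b*R - a*Z != 0)
 (eZ: Z = P*(b*X-a*Y)/(b*Y-a*X)) (eQ : Q = X*(b*W-a*Z)/(b*Z-a*W)).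

Let D := b*Y - a*X.
Let N0 := b*X - a*Y.
Let A := b*P*N0 - a*W*D.
Let B := b*W*D - a*P*N0.
Let C := b*R*D - a*P*N0.

Lemma hN0 : N0 != 0.
Proof. apply: (@nz_frac _ (Z / P) N0 D); first by rewrite mulf_neq0 ?invr_eq0.
by rewrite eZ /N0 /D; field; rewrite h1 hP. Qed.

Lemma p2 : b*Z - a*W = A / D.
Proof. by rewrite eZ /A /D /N0; field; rewrite h1. Qed.
Lemma p1 : b*W - a*Z = B / D.
Proof. by rewrite eZ /B /D /N0; field; rewrite h1. Qed.
Lemma p3 : b*R - a*Z = C / D.
Proof. by rewrite eZ /C /D /N0; field; rewrite h1. Qed.
Lemma hA : A != 0. Proof. exact: (@nz_frac F (b*Z-a*W) A D h2 p2). Qed.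
Lemma hC : C != 0. Proof. exact: (@nz_frac F (b*R-a*Z) C D h3 p3). Qed.
Lemma eQ' : Q = X * B / A.
Proof. rewrite eQ p1 p2; field. by rewrite hA /D h1. Qed.
Hypotheses (eS : S = Y*(b*Z-a*R)/(b*R-a*Z))
 (h5 : a*Z - b*R != 0).
Let E := b*P*N0 - a*R*D.
Let G := a*P*N0 - b*R*D.
Let H := a*W*D - b*P*N0.
Lemma eS' : S = Y * E / C.
Proof. have p4 : b*Z - a*R = E / D by rewrite eZ /E /D /N0; field; rewrite h1.
rewrite eS p4 p3; field. by rewrite hC /D h1. Qed.
Lemma q1 : a*Z - b*R = G / D.
Proof. by rewrite eZ /G /D /N0; field; rewrite h1. Qed.
Lemma q2 : a*W - b*Z = H / D.
Proof. by rewrite eZ /H /D /N0; field; rewrite h1. Qed.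
Lemma hG : G != 0. Proof. exact: (@nz_frac F _ G D h5 q1). Qed.
Lemma hH : H != 0.
Proof. apply: (@nz_frac F _ H D _ q2). by rewrite -opprB oppr_eq0. Qed.

Lemma part1 : (a*Q - b*S)/Z - (a*X - b*Y)/P
   = (b^+2 - a^+2)*(((a*Z-b*R)/Y)^-1 - ((a*W-b*Z)/X)^-1).
Proof.
rewrite !invf_div q1 q2 eQ' eS' eZ.
have := hA; have := hC; have := hG; have := hH; have := hN0.
rewrite /H /A /C /G /B /E /N0 /D => k1 k2 k3 k4 k5.
field. by rewrite ?(h1, hP, hX, hY, k1, k2, k3, k4, k5).
Qed.

Lemma part2 :
  let v := a * (X / P) in let vb := a * (W / X) in
  let vt := a * (Z / Y) in let vtb := a * (Q / Z) in
  (b^+2 - a^+2) * (v * vb - vt * vtb) ^+ 2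
   + (v - vtb) * (vb - vt) * (- a^+2 - v * vb) * (- a^+2 - vt * vtb) = 0.
Proof.
rewrite /= eQ' eZ.
have := hA; have := hN0.
rewrite /A /B /N0 /D => k1 k2.
field. by rewrite ?(h1, hP, hX, hY, k1, k2).
Qed.
End S.

Lemma divE (F: fieldType) (x P y : F) : P != 0 -> x / P = y -> x = P * y.
Proof. by move=> hP <-; rewrite mulrC divfK. Qed.

Theorem mainTheorem5 (lambda a b : Cc) (phi : int -> int -> Cc)
  (ha : a ^+ 2 = - lambda) (hb : b ^+ 2 = 1 - lambda)
  (* genericity: all quantities we divide by are nonzero *)
  (hphi : forall l m : int, phi l m != 0)
  (hden : forall l m : int, b * phi l (m + 1) - a * phi (l + 1) m != 0)
  (hu : forall l m : int, a * phi (l + 1) m - b * phi l (m + 1) != 0)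
  (heq : forall l m : int,
     phi (l + 1) (m + 1) / phi l m
     = (b * phi (l + 1) m - a * phi l (m + 1))
       / (b * phi l (m + 1) - a * phi (l + 1) m)) :
  (forall l m : int,
     u_of a b phi (l + 1) (m + 1) - u_of a b phi l m
     = (u_of a b phi l (m + 1))^-1 - (u_of a b phi (l + 1) m)^-1)
  /\
  (forall l m : int,
     let v := v_of a phi l m in
     let vb := v_of a phi (l + 1) m in
     let vt := v_of a phi l (m + 1) in
     let vtb := v_of a phi (l + 1) (m + 1) in
     (v * vb - vt * vtb) ^+ 2
       + (v - vtb) * (vb - vt) * (lambda - v * vb) * (lambda - vt * vtb) = 0).
Proof.
have hab : b ^+ 2 - a ^+ 2 = 1 by rewrite ha hb opprK subrK.
have hl : lambda = - a ^+ 2 by rewrite ha opprK.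
have eq' : forall l m, phi (l + 1) (m + 1) = phi l m * (b * phi (l + 1) m - a * phi l (m + 1))
       / (b * phi l (m + 1) - a * phi (l + 1) m).
  by move=> l m; rewrite -mulrA; apply: divE; [exact: hphi | exact: heq].
split.
- move=> l m; rewrite /u_of.
  have := @part1 Cc a b (phi l m) (phi (l+1) m) (phi l (m+1)) (phi (l+1) (m+1))
    (phi (l+1+1) m) (phi (l+1+1) (m+1)) (phi l (m+1+1)) (phi (l+1) (m+1+1))
    (hphi _ _) (hphi _ _) (hden _ _) (hden _ _) (hden _ _) (eq' _ _) (eq' _ _) (eq' _ _) (hu _ _).
  by rewrite hab mul1r.
- move=> l m /=; rewrite /v_of hl.
  have := @part2 Cc a b (phi l m) (phi (l+1) m) (phi l (m+1)) (phi (l+1) (m+1))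
    (phi (l+1+1) m) (phi (l+1+1) (m+1))
    (hphi _ _) (hphi _ _) (hphi _ _) (hphi _ _) (hden _ _) (hden _ _) (eq' _ _) (eq' _ _).
  by rewrite /= hab mul1r.
Qed.
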